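(* Let $\beta,\psi_0$ be real constants, $\kappa>0$, $K\neq0$, and $I=\{r>0:1-Kr^2>0\}$. Set $\tilde{\mathcal{C}}\equiv0$, $\mathcal{A}(\psi)=\frac{5\beta}{8}\psi^2$, $\mathcal{V}(\psi)=-\frac{15K\beta}{4\kappa^2}\psi^2$, and $$A(r)=1-Kr^2,\qquad C(r)=1,\qquad \psi(r)=\frac{2\psi_0}{5K(1-Kr^2)^{5/4}} .$$ Then $E^{(1)}_{tt}=E^{(1)}_{rr}=E^{(1)}_{\vartheta\vartheta}=E^{(1)}_{\psi}=0$ hold on $I$.
   Context: Metric ansatz ${\rm d}s^2=A(r)^2{\rm d}t^2-\frac{C(r)^2}{A(r)^2}{\rm d}r^2-r^2{\rm d}\Omega^2$, $\psi=\psi(r)$. Primes on $A,C,\psi$ are $r$-derivatives; $\mathcal{A}',\tilde{\mathcal{C}}',\tilde{\mathcal{C}}'',\mathcal{V}'$ are $\psi$-derivatives evaluated at $\psi(r)$. The real-tetrad reduced vacuum field equations of the scalar-torsion theory are: $E^{(1)}_{tt}:\ 0=\mathcal{A}\frac{A^2(-2rACA'-A^2(C-2rC')+C^3)}{r^2C^3}+\tilde{\mathcal{C}}'\Big(\frac{A^4\psi''}{C^2}-\frac{A^3\psi'(-rCA'+rAC'-2C^2)}{rC^3}\Big)-\frac{2A^3(A-C)\psi'\mathcal{A}'}{rC^2}+\frac{A^4\psi'^2\tilde{\mathcal{C}}''}{C^2}-\frac{\beta A^4\psi'^2}{2C^2}+\kappa^2A^2\mathcal{V}$; $E^{(1)}_{rr}:\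 0=-\frac{(2rAA'+A^2-C^2)\mathcal{A}}{r^2A^2}+\big(\frac{A'}{A}+\frac2r\big)\psi'\tilde{\mathcal{C}}'+\frac{\kappa^2C^2\mathcal{V}}{A^2}+\frac12\beta\psi'^2$; $E^{(1)}_{\vartheta\vartheta}:\ 0=-\frac{A\psi'(rA'+A-C)\mathcal{A}'}{rC^2}+\tilde{\mathcal{C}}'\Big(\frac{A\psi'(rCA'-rAC'+C^2)}{rC^3}+\frac{A^2\psi''}{C^2}\Big)+\frac{\mathcal{A}(-rCA'^2+A(rA'C'-C(rA''+2A'))+A^2C')}{rC^3}+\frac{A^2\psi'^2\tilde{\mathcal{C}}''}{C^2}-\frac{\beta A^2\psi'^2}{2C^2}+\kappa^2\mathcal{V}$; $E^{(1)}_{\psi}:\ 0=\frac{(A-C)(2rA'+A-C)\mathcal{A}'}{r^2C^2}+\frac{\beta A\psi'(2rCA'+A(2C-rC'))}{rC^3}+\frac{\beta A^2\psi''}{C^2}+\kappa^2\mathcal{V}'+\frac{\tilde{\mathcal{C}}'(rCA'(rA'-2C)+A(-r^2A'C'+rC(rA''+6A')-2C^2)+2A^2(C-rC'))}{r^2C^3}$. *)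

(* Defs.v *)
From Stdlib Require Import Reals.
From Coquelicot Require Import Coquelicot.
Open Scope R_scope.

(* Reduced field equations for the metric ansatz
   ds^2 = A^2 dt^2 - C^2/A^2 dr^2 - r^2 dOmega^2, psi = psi(r).
   Acal, Ct (= tilde C), V are functions of the scalar psi; primes on them
   are psi-derivatives evaluated at psi(r). *)

Definition E_tt (beta kappa : R) (Acal Ct V A C psi : R -> R) (r : R) : R :=
  let a := A r in let a' := Derive A r in
  let c := C r in let c' := Derive C r in
  let p := psi r in let p' := Derive psi r in let p'' := Derive (Derive psi) r in
  let cA := Acal p in let cA' := Derive Acal p in
  let ct' := Derive Ct p in let ct'' := Derive (Derive Ct) p in
  let v := V p in
  cA * (a^2 * (-2*r*a*c*a' - a^2*(c - 2*r*c') + c^3)) / (r^2 * c^3)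
  + ct' * (a^4 * p'' / c^2 - a^3 * p' * (-r*c*a' + r*a*c' - 2*c^2) / (r * c^3))
  - 2 * a^3 * (a - c) * p' * cA' / (r * c^2)
  + a^4 * p'^2 * ct'' / c^2
  - beta * a^4 * p'^2 / (2 * c^2)
  + kappa^2 * a^2 * v.

Definition E_rr (beta kappa : R) (Acal Ct V A C psi : R -> R) (r : R) : R :=
  let a := A r in let a' := Derive A r in
  let c := C r in
  let p := psi r in let p' := Derive psi r in
  let cA := Acal p in let ct' := Derive Ct p in let v := V p in
  - (2*r*a*a' + a^2 - c^2) * cA / (r^2 * a^2)
  + (a' / a + 2 / r) * p' * ct'
  + kappa^2 * c^2 * v / a^2
  + 1/2 * beta * p'^2.

Definition E_thth (beta kappa : R) (Acal Ct V A C psi : R -> R) (r : R) : R :=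
  let a := A r in let a' := Derive A r in let a'' := Derive (Derive A) r in
  let c := C r in let c' := Derive C r in
  let p := psi r in let p' := Derive psi r in let p'' := Derive (Derive psi) r in
  let cA := Acal p in let cA' := Derive Acal p in
  let ct' := Derive Ct p in let ct'' := Derive (Derive Ct) p in
  let v := V p in
  - a * p' * (r*a' + a - c) * cA' / (r * c^2)
  + ct' * (a * p' * (r*c*a' - r*a*c' + c^2) / (r * c^3) + a^2 * p'' / c^2)
  + cA * (-r*c*a'^2 + a*(r*a'*c' - c*(r*a'' + 2*a')) + a^2*c') / (r * c^3)
  + a^2 * p'^2 * ct'' / c^2
  - beta * a^2 * p'^2 / (2 * c^2)
  + kappa^2 * v.

Definition E_psi (beta kappa : R) (Acal Ct V A C psi : R -> R) (r : R) : R :=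
  let a := A r in let a' := Derive A r in let a'' := Derive (Derive A) r in
  let c := C r in let c' := Derive C r in
  let p := psi r in let p' := Derive psi r in let p'' := Derive (Derive psi) r in
  let cA' := Derive Acal p in
  let ct' := Derive Ct p in
  let v' := Derive V p in
  (a - c) * (2*r*a' + a - c) * cA' / (r^2 * c^2)
  + beta * a * p' * (2*r*c*a' + a*(2*c - r*c')) / (r * c^3)
  + beta * a^2 * p'' / c^2
  + kappa^2 * v'
  + ct' * (r*c*a'*(r*a' - 2*c) + a*(-r^2*a'*c' + r*c*(r*a'' + 6*a') - 2*c^2)
           + 2*a^2*(c - r*c')) / (r^2 * c^3).

(* Main.v *)
Require Import Defs.
From Stdlib Require Import Reals Lra.
From Coquelicot Require Import Coquelicot.
Open Scope R_scope.

Lemma exp54 u : 0 < u -> exp (5/4 * ln u) = u * exp (1/4 * ln u).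
Proof. intros. replace (5/4*ln u) with (ln u + 1/4*ln u) by field.
rewrite exp_plus, exp_ln; auto. Qed.

Lemma dpsi psi0 K x : K<>0 -> 0 < 1 - K*x^2 -> is_derive (fun r => 2 * psi0 / (5 * K * Rpower (1 - K * r^2) (5/4))) x
  (psi0 * x / ((1-K*x^2)^2 * exp (1/4 * ln (1-K*x^2)))).
Proof.
intros. unfold Rpower. auto_derive.
- replace (1 + - (K * (x * (x * 1)))) with (1-K*x^2) by ring.
  split; auto. split; auto. apply Rmult_integral_contrapositive; split.
  apply Rmult_integral_contrapositive; split; lra. apply Rgt_not_eq, exp_pos.
- replace (1 + - (K * (x * (x * 1)))) with (1-K*x^2) by ring.
  rewrite exp54; auto. assert (0 < exp (1/4 * ln (1-K*x^2))) by apply exp_pos.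
  field. repeat split; lra.
Qed.

Lemma dpsi2 psi0 K x : 0 < 1 - K*x^2 -> is_derive (fun x => psi0 * x / ((1-K*x^2)^2 * exp (1/4 * ln (1-K*x^2)))) x
  (psi0 / ((1-K*x^2)^2 * exp (1/4 * ln (1-K*x^2))) + 9/2 * psi0 * K * x^2 / ((1-K*x^2)^3 * exp (1/4 * ln (1-K*x^2)))).
Proof.
intros. auto_derive.
- replace (1 + - (K * (x * (x * 1)))) with (1-K*x^2) by ring.
  split; auto. split; auto. apply Rmult_integral_contrapositive; split.
  apply Rmult_integral_contrapositive; split; lra. apply Rgt_not_eq, exp_pos.
- replace (1 + - (K * (x * (x * 1)))) with (1-K*x^2) by ring.
  assert (0 < exp (1/4 * ln (1-K*x^2))) by apply exp_pos.
  field. repeat split; lra.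
Qed.

Theorem mainTheorem5 (beta psi0 kappa K : R) (hkappa : 0 < kappa) (hK : K <> 0) :
  let Acal := fun x : R => 5 * beta / 8 * x^2 in
  let Ct := fun _ : R => 0 in
  let V := fun x : R => - (15 * K * beta) / (4 * kappa^2) * x^2 in
  let A := fun r : R => 1 - K * r^2 in
  let C := fun _ : R => 1 in
  let psi := fun r : R => 2 * psi0 / (5 * K * Rpower (1 - K * r^2) (5/4)) in
  forall r : R, 0 < r -> 0 < 1 - K * r^2 ->
    E_tt beta kappa Acal Ct V A C psi r = 0 /\
    E_rr beta kappa Acal Ct V A C psi r = 0 /\
    E_thth beta kappa Acal Ct V A C psi r = 0 /\
    E_psi beta kappa Acal Ct V A C psi r = 0.
Proof.
  intros Acal Ct V A C psi r hr hu.
  assert (dAc : forall y, Derive Acal y = 5*beta/4*y).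
  { intro y. apply is_derive_unique. unfold Acal. auto_derive; try easy; field; try lra. }
  assert (dV : forall y, Derive V y = - (15 * K * beta) / (4 * kappa^2) * (2*y)).
  { intro y. apply is_derive_unique. unfold V. auto_derive; try easy; field; try lra. }
  assert (dCt : forall y, Derive Ct y = 0) by (intro; unfold Ct, C; apply Derive_const).
  assert (dCt2 : forall y, Derive (Derive Ct) y = 0).
  { intro y. rewrite (Derive_ext _ (fun _ => 0)). apply Derive_const. exact dCt. }
  assert (dC : forall y, Derive C y = 0) by (intro; unfold Ct, C; apply Derive_const).
  assert (dA : forall y, Derive A y = -(2*K*y)).
  { intro y. apply is_derive_unique. unfold A. auto_derive; try easy; field; try lra. }
  assert (dA2 : Derive (Derive A) r = -(2*K)).
  { rewrite (Derive_ext _ (fun y => -(2*K*y))). apply is_derive_unique. auto_derive; try easy; field; try lra. exact dA. }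
  assert (dP : Derive psi r = psi0 * r / ((1-K*r^2)^2 * exp (1/4 * ln (1-K*r^2)))).
  { apply is_derive_unique. apply dpsi; auto. }
  assert (dP2 : Derive (Derive psi) r = psi0 / ((1-K*r^2)^2 * exp (1/4 * ln (1-K*r^2))) + 9/2 * psi0 * K * r^2 / ((1-K*r^2)^3 * exp (1/4 * ln (1-K*r^2)))).
  { rewrite (Derive_ext_loc _ (fun x => psi0 * x / ((1-K*x^2)^2 * exp (1/4 * ln (1-K*x^2))))).
    - apply is_derive_unique. apply dpsi2; auto.
    - apply (locally_open (fun t => 0 < 1 - K*t^2)); auto.
      + apply (open_comp (fun t : R => 1 - K*t^2) (fun y => 0 < y)).
        * intros x _. apply (ex_derive_continuous (fun t : R => 1 - K*t^2)). auto_derive; auto.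
        * apply open_gt.
      + intros x hx. apply is_derive_unique. apply dpsi; auto. }
  assert (hP : psi r = 2 * psi0 / (5 * K * ((1-K*r^2) * exp (1/4 * ln (1-K*r^2))))).
  { unfold psi, Rpower. rewrite exp54; auto. }
  assert (hq : 0 < exp (1/4 * ln (1-K*r^2))) by apply exp_pos.
  set (q := exp (1/4 * ln (1-K*r^2))) in *.
  unfold E_tt, E_rr, E_thth, E_psi; cbv zeta.
  rewrite !dAc, !dV, !dCt, !dCt2, !dC, !dA, dA2, dP, dP2, hP.
  unfold Acal, A, C, V.
  repeat split; field; repeat split; lra.
Qed.
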